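(* For $n=1,2,\dots$ let $\varphi_*^{(n)}(x):=\varphi^{(n)}(x)-\frac12$, $x\in[0,1]$, and let $E[X]:=\int_0^1X(x)\,dx$. Then for any positive integers $i<j$, $$E\big[(\varphi_*^{(i)})^2(\varphi_*^{(j)})^2\big]-E\big[(\varphi_*^{(i)})^2\big]E\big[(\varphi_*^{(j)})^2\big]=\frac1{180}\cdot\frac1{4^{j-i}}.$$
   Context: The tent map on $[0,1]$ is $\varphi(x)=2x$ for $x\in[0,1/2]$ and $\varphi(x)=2(1-x)$ for $x\in[1/2,1]$; it is extended to $\mathbb{R}$ by $\varphi(x):=\varphi(x-[x])$, and $\varphi^{(n)}$ denotes the $n$-fold iterate of $\varphi$, so that $\varphi^{(n)}(x)=\varphi(2^{n-1}x)$. *)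

(* Defs.v *)
From Stdlib Require Import Reals.
From Coquelicot Require Import Coquelicot.
Open Scope R_scope.

Definition tent01 (y : R) : R := if Rle_dec y (1/2) then 2 * y else 2 * (1 - y).
Definition tent (x : R) : R := tent01 (x - IZR (Int_part x)).

Definition tent_iter (n : nat) (x : R) : R := Nat.iter n tent x.

Definition tent_star (n : nat) (x : R) : R := tent_iter n x - 1/2.

Definition Ex (X : R -> R) : R := RInt X 0 1.

(* Main.v *)
Require Import Defs.
From Stdlib Require Import Reals Lra Lia.
From Coquelicot Require Import Coquelicot.
Open Scope R_scope.

Definition t (x : R) : R := 1 - Rabs (2*x - 1).
Definition q (x : R) : R := (x - 1/2)^2.

Lemma cmult (f g : R -> R) x : continuous f x -> continuous g x -> continuous (fun y => f y * g y) x.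
Proof. intros; apply (continuous_mult (K:=R_AbsRing)); auto. Qed.
Lemma cplus (f g : R -> R) x : continuous f x -> continuous g x -> continuous (fun y => f y + g y) x.
Proof. intros; apply (continuous_plus (V:=R_NormedModule)); auto. Qed.
Lemma cminus (f g : R -> R) x : continuous f x -> continuous g x -> continuous (fun y => f y - g y) x.
Proof. intros; apply (continuous_minus (V:=R_NormedModule)); auto. Qed.
Lemma cpow (f : R -> R) n x : continuous f x -> continuous (fun y => f y ^ n) x.
Proof. intros; induction n; simpl. apply continuous_const. apply cmult; auto. Qed.
Lemma cdiv (f : R -> R) c x : continuous f x -> continuous (fun y => f y / c) x.
Proof. intros; apply cmult; auto; apply continuous_const. Qed.
Lemma ccomp (f g : R -> R) x : continuous f x -> continuous g (f x) -> continuous (fun y => g (f y)) x.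
Proof. intros; apply continuous_comp; auto. Qed.

Lemma copp (f : R -> R) x : continuous f x -> continuous (fun y => - f y) x.
Proof. intros; apply (continuous_opp (V:=R_NormedModule)); auto. Qed.
Ltac cont := do 40 try first [ apply continuous_const | apply continuous_id | apply cmult | apply cminus | apply cplus | apply copp | apply cpow | apply cdiv
  | apply continuous_id | apply continuous_const | assumption ].

Lemma t_cont x : continuous t x.
Proof. unfold t. apply cminus. apply continuous_const. apply (ccomp (fun y => 2*y-1) Rabs). cont. apply continuous_Rabs. Qed.
Lemma iter_cont k x : continuous (Nat.iter k t) x.
Proof. revert x; induction k; intro x; simpl. apply continuous_id.
  apply (ccomp (Nat.iter k t) t); auto. apply t_cont. Qed.
Lemma q_cont x : continuous q x.
Proof. unfold q; cont. Qed.
Ltac req := match goal with |- ?A = ?B => change (@eq R A B) end.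
Definition Lop (F : R -> R) (y : R) : R := (F (y/2) + F (1 - y/2)) / 2.

Lemma exR (f : R -> R) a b : (forall x, continuous f x) -> ex_RInt f a b.
Proof. intros H; apply (ex_RInt_continuous (V:=R_CompleteNormedModule)); intros; apply H. Qed.

Lemma lin_half (K : R -> R) (u v a b : R) : (forall x, continuous K x) ->
  RInt K (u*a+v) (u*b+v) = u * RInt (fun y => K (u*y+v)) a b.
Proof.
  intros HK. rewrite <- (RInt_comp_lin (V:=R_CompleteNormedModule)) by (apply exR; auto).
  rewrite (RInt_scal (V:=R_CompleteNormedModule)). reflexivity.
  apply exR. intro x. apply (ccomp (fun y => u*y+v) K); auto. cont.
Qed.

Lemma transfer (F G : R -> R) : (forall x, continuous F x) -> (forall x, continuous G x) ->
  RInt (fun x => F x * G (t x)) 0 1 = RInt (fun y => Lop F y * G y) 0 1.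
Proof.
  intros HF HG.
  assert (HFG : forall x, continuous (fun x => F x * G (t x)) x).
  { intro x; apply cmult; auto. apply (ccomp t G); auto. apply t_cont. }
  assert (H1 : forall x, continuous (fun y => F (y/2) * G y) x).
  { intro x; apply cmult; auto. apply (ccomp (fun y => y/2) F); auto. cont. }
  assert (H2 : forall x, continuous (fun y => F (1 - y/2) * G y) x).
  { intro x; apply cmult; auto. apply (ccomp (fun y => 1 - y/2) F); auto. cont. }
  rewrite <- (RInt_Chasles (V:=R_CompleteNormedModule) _ 0 (1/2) 1) by (apply exR; auto).
  assert (E1 : RInt (fun y => F (y/2) * G y) 0 1 = 2 * RInt (fun x => F x * G (t x)) 0 (1/2)).
  { replace 0 with (2*0+0) at 1 by ring. replace 1 with (2*(1/2)+0) at 1 by field.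
    rewrite lin_half by auto. f_equal. apply RInt_ext. intros x Hx.
    rewrite Rmin_left in Hx by lra. rewrite Rmax_right in Hx by lra.
    unfold t. rewrite Rabs_left by lra.
    replace ((2*x+0)/2) with x by field. replace (1 - - (2*x-1)) with (2*x+0) by ring. reflexivity. }
  assert (E2 : RInt (fun y => F (1 - y/2) * G y) 1 0 = -2 * RInt (fun x => F x * G (t x)) (1/2) 1).
  { replace 0 with (-2*1+2) at 1 by ring. replace 1 with (-2*(1/2)+2) at 1 by field.
    rewrite lin_half by auto. f_equal. apply RInt_ext. intros x Hx.
    rewrite Rmin_left in Hx by lra. rewrite Rmax_right in Hx by lra.
    unfold t. rewrite Rabs_right by lra.
    replace (1 - (-2*x+2)/2) with x by field. replace (1 - (2*x-1)) with (-2*x+2) by ring. reflexivity. }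
  rewrite <- opp_RInt_swap in E2 by (apply exR; auto).
  rewrite (RInt_ext (fun y => Lop F y * G y) (fun y => plus (scal (/2) (F (y/2) * G y)) (scal (/2) (F (1 - y/2) * G y)))).
  2:{ intros; unfold Lop, plus, scal; simpl; unfold mult; simpl. field. }
  rewrite (RInt_plus (V:=R_CompleteNormedModule)).
  2,3: apply exR; intro; apply cmult; auto; apply continuous_const.
  rewrite !(RInt_scal (V:=R_CompleteNormedModule)) by (apply exR; auto).
  unfold plus, scal, opp in *; simpl in *; unfold mult in *; simpl in *.
  lra.
Qed.
Lemma t_range x : 0 <= x <= 1 -> 0 <= t x <= 1.
Proof. intros H; unfold t. destruct (Rle_dec 0 (2*x-1)). rewrite Rabs_right; lra. rewrite Rabs_left; lra. Qed.
Lemma iter_range k x : 0 <= x <= 1 -> 0 <= Nat.iter k t x <= 1.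
Proof. intros H; induction k; simpl; auto. apply t_range; auto. Qed.

Lemma tent01_t y : tent01 y = t y.
Proof. unfold tent01, t. destruct (Rle_dec y (1/2)).
  rewrite Rabs_left1; lra. rewrite Rabs_right; lra. Qed.

Lemma tent_t x : 0 <= x <= 1 -> tent x = t x.
Proof.
  intros H. unfold tent. rewrite tent01_t. destruct (base_Int_part x) as [H1 H2].
  destruct (Req_dec x 1) as [E|E].
  - assert (Int_part x = 1%Z).
    { assert (Int_part x < 2)%Z by (apply lt_IZR; lra).
      assert (0 < Int_part x)%Z by (apply lt_IZR; lra). lia. }
    rewrite H0. subst. unfold t. simpl. rewrite (Rabs_left (2*(1-1)-1)) by lra. rewrite Rabs_right; lra.
  - assert (Int_part x = 0%Z).
    { assert (Int_part x < 1)%Z by (apply lt_IZR; lra).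
      assert (-1 < Int_part x)%Z by (apply lt_IZR; lra). lia. }
    rewrite H0. simpl. f_equal. ring.
Qed.

Lemma tent_iter_t n x : 0 <= x <= 1 -> tent_iter n x = Nat.iter n t x.
Proof. intros H; induction n; simpl; auto. unfold tent_iter in *; simpl. rewrite IHn.
  apply tent_t, iter_range; auto. Qed.

Lemma inv_int n (G : R -> R) : (forall x, continuous G x) ->
  RInt (fun x => G (Nat.iter n t x)) 0 1 = RInt G 0 1.
Proof.
  revert G; induction n; intros G HG; simpl; auto.
  rewrite <- (IHn G HG).
  rewrite (RInt_ext _ (fun x => (fun _ => 1) x * (fun y => G (Nat.iter n t y)) (t x))).
  2:{ intros; simpl. rewrite <- Nat.iter_succ_r. simpl. ring. }
  rewrite (transfer (fun _ => 1) (fun y => G (Nat.iter n t y))). apply RInt_ext. intros. unfold Lop. replace ((1+1)/2) with 1 by field. apply Rmult_1_l.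
  intros; apply continuous_const.
  intros; apply (ccomp (Nat.iter n t) G); auto; apply iter_cont.
Qed.
Lemma base_int a b c :
  RInt (fun y => (a * q y + b * (y - 1/2) + c) * q y) 0 1 = a / 80 + c / 12.
Proof.
  set (f := fun y => a*(y-1/2)^5/5 + b*(y-1/2)^4/4 + c*(y-1/2)^3/3).
  assert (H : is_RInt (fun y => (a * q y + b * (y - 1/2) + c) * q y) 0 1 (minus (f 1) (f 0))).
  { apply (is_RInt_derive (V:=R_CompleteNormedModule)).
    - intros x _. unfold f, q. auto_derive; auto. field.
    - intros x _. apply cmult. apply cplus. apply cplus. apply cmult. apply continuous_const.
      apply q_cont. cont. apply continuous_const. apply q_cont. }
  rewrite (is_RInt_unique _ _ _ _ H). unfold f, minus, plus, opp; simpl. field.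
Qed.

Lemma Pk k : forall a b c,
  RInt (fun y => (a * q y + b * (y - 1/2) + c) * q (Nat.iter k t y)) 0 1
  = a * (1/144 + / 4 ^ k / 180) + c / 12.
Proof.
  induction k; intros a b c.
  - simpl. rewrite base_int. field.
  - rewrite (RInt_ext _ (fun y => (fun y => a * q y + b * (y - 1/2) + c) y * (fun y => q (Nat.iter k t y)) (t y))).
    2:{ intros; simpl. rewrite <- Nat.iter_succ_r. reflexivity. }
    rewrite (transfer (fun y => a * q y + b * (y - 1/2) + c) (fun y => q (Nat.iter k t y))).
    2:{ intros; cont. }
    2:{ intros; apply (ccomp (Nat.iter k t) q). apply iter_cont. apply q_cont. }
    rewrite (RInt_ext _ (fun y => ((a/4) * q y + (-a/4) * (y - 1/2) + (a/16 + c)) * q (Nat.iter k t y))).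
    2:{ intros. unfold Lop, q. req. field. }
    rewrite IHk. simpl. field. apply pow_nonzero. lra.
Qed.

Theorem lemma2p6 (i j : nat) (hi : (1 <= i)%nat) (hij : (i < j)%nat) :
  Ex (fun x => (tent_star i x)^2 * (tent_star j x)^2)
  - Ex (fun x => (tent_star i x)^2) * Ex (fun x => (tent_star j x)^2)
  = 1/180 * / 4 ^ (j - i).
Proof.
  unfold Ex.
  assert (Hq : forall n, RInt (fun x => (tent_star n x)^2) 0 1 = 1/12).
  { intro n. rewrite (RInt_ext _ (fun x => q (Nat.iter n t x))).
    2:{ intros x Hx. rewrite Rmin_left in Hx by lra. rewrite Rmax_right in Hx by lra.
        unfold tent_star, q. rewrite tent_iter_t by lra. reflexivity. }
    rewrite inv_int by apply q_cont.
    rewrite (RInt_ext _ (fun y => (0 * q y + 0 * (y - 1/2) + 1) * q (Nat.iter 0 t y))).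
    2:{ intros; simpl; req; ring. }
    rewrite Pk. req. field. }
  rewrite !Hq.
  set (k := (j - i)%nat). assert (Ej : j = (k + i)%nat) by (unfold k; lia).
  rewrite (RInt_ext _ (fun x => (fun u => q u * q (Nat.iter k t u)) (Nat.iter i t x))).
  2:{ intros x Hx. rewrite Rmin_left in Hx by lra. rewrite Rmax_right in Hx by lra.
      unfold tent_star, q. rewrite !tent_iter_t by lra. rewrite Ej, Nat.iter_add. reflexivity. }
  rewrite (inv_int i (fun u => q u * q (Nat.iter k t u))).
  2:{ intros; apply cmult. apply q_cont. apply (ccomp (Nat.iter k t) q). apply iter_cont. apply q_cont. }
  rewrite (RInt_ext _ (fun y => (1 * q y + 0 * (y - 1/2) + 0) * q (Nat.iter k t y))).
  2:{ intros; simpl; req; ring. }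
  rewrite Pk. req. field. apply pow_nonzero. lra.
Qed.
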